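(* Let $V>0$, $G_o>0$, $\ell>0$ be constants and set $\rho=V/G_o$. Consider the system on $\{r>0\}$ $$\dot r = -V\cos\psi,\qquad \dot\psi=\Big[\frac1r-\frac1\rho\exp\!\Big(-\frac r\ell\Big)\Big]V\sin\psi .$$ If $\ell>\rho e$, the system has exactly four equilibria (with $\psi$ taken modulo $2\pi$), namely $(r^{*},\pm\pi/2)$ and $(r^{**},\pm\pi/2)$ with $$r^{*}=-\ell\,W_{-1}\!\Big(-\frac{\rho}{\ell}\Big),\qquad r^{**}=-\ell\,W_{0}\!\Big(-\frac{\rho}{\ell}\Big);$$ the linearization at $(r^{*},\pm\pi/2)$ has a pair of nonzero real eigenvalues of opposite sign (saddle type), while the linearization at $(r^{**},\pm\pi/2)$ has a pair of nonzero purely imaginary eigenvalues (center type). If $\ell<\rho e$, the system has no equilibria.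
   Context: This system models a nonholonomic mobile sensor moving at constant speed $V$ in a radially symmetric signal field $f(r,t)=2e^{-r/\ell}\cos(r-t)$ from a source at the origin, with turning gain proportional to the signal's spectral magnitude, $G=G_o e^{-r/\ell}$. Here $r$ is the distance from the source and $\psi$ is the angle between the direction from the sensor to the source and the sensor's heading. $W_0$ and $W_{-1}$ denote the principal and lower real branches of the Lambert W function on $[-1/e,0)$. *)

(* Defs.v *)
From Stdlib Require Import Reals ClassicalEpsilon.
From Coquelicot Require Import Coquelicot.
Open Scope R_scope.

Definition LambertW0 (y : R) : R :=
  epsilon (inhabits 0) (fun w => -1 <= w /\ w * exp w = y).
Definition LambertWm1 (y : R) : R :=
  epsilon (inhabits 0) (fun w => w <= -1 /\ w * exp w = y).

Definition rho (V Go : R) : R := V / Go.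
Definition fr (V : R) (r psi : R) : R := - V * cos psi.
Definition fpsi (V Go l : R) (r psi : R) : R :=
  (1 / r - 1 / rho V Go * exp (- r / l)) * V * sin psi.

Definition is_equilibrium (V Go l r psi : R) : Prop :=
  0 < r /\ fr V r psi = 0 /\ fpsi V Go l r psi = 0.

Definition jac11 (f : R -> R -> R) (r psi : R) := Derive (fun x => f x psi) r.
Definition jac12 (f : R -> R -> R) (r psi : R) := Derive (fun y => f r y) psi.

Definition is_eigenvalue2 (a b c d : R) (z : C) : Prop :=
  Cminus (Cmult (Cminus (RtoC a) z) (Cminus (RtoC d) z)) (Cmult (RtoC b) (RtoC c))
  = RtoC 0.

Definition lin_eigenvalue (V Go l r psi : R) (z : C) : Prop :=
  is_eigenvalue2
    (jac11 (fun x y => fr V x y) r psi) (jac12 (fun x y => fr V x y) r psi)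
    (jac11 (fpsi V Go l) r psi) (jac12 (fpsi V Go l) r psi) z.

Definition saddle_type (V Go l r psi : R) : Prop :=
  exists a b : R, a < 0 < b /\
    forall z : C, lin_eigenvalue V Go l r psi z <-> (z = RtoC a \/ z = RtoC b).

Definition center_type (V Go l r psi : R) : Prop :=
  exists w : R, 0 < w /\
    forall z : C, lin_eigenvalue V Go l r psi z <-> (z = (0, w) \/ z = (0, - w)).

(* Main.v *)
Require Import Defs.
From Stdlib Require Import Reals Lra Psatz ClassicalEpsilon.
From Coquelicot Require Import Coquelicot.
Open Scope R_scope.

Definition hW (w : R) := w * exp w.

Lemma hW_deriv c : derivable_pt_lim hW c ((c + 1) * exp c).
Proof.
  apply is_derive_Reals. unfold hW. auto_derive; auto. ring.
Qed.

Lemma hW_incr a b : -1 <= a -> a < b -> hW a < hW b.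
Proof.
  intros Ha Hab.
  destruct (MVT_cor2 hW (fun c => (c + 1) * exp c) a b Hab) as [c [Hc1 Hc2]].
  { intros; apply hW_deriv. }
  assert (0 < (c + 1) * exp c) by (apply Rmult_lt_0_compat; [lra| apply exp_pos]).
  nra.
Qed.

Lemma hW_decr a b : b <= -1 -> a < b -> hW b < hW a.
Proof.
  intros Ha Hab.
  destruct (MVT_cor2 hW (fun c => (c + 1) * exp c) a b Hab) as [c [Hc1 Hc2]].
  { intros; apply hW_deriv. }
  assert (0 < - (c + 1) * exp c) by (apply Rmult_lt_0_compat; [lra| apply exp_pos]).
  nra.
Qed.

Lemma hW_lb w : - exp (-1) <= hW w.
Proof.
  unfold hW.
  assert (E : exp (-1) = exp (-1 - w) * exp w) by (rewrite <- exp_plus; f_equal; ring).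
  pose proof (exp_ineq1_le (-1 - w)). pose proof (exp_pos w). rewrite E. nra.
Qed.

Lemma hW_cont : continuity hW.
Proof.
  intro x. apply derivable_continuous_pt. exists ((x+1)*exp x). apply hW_deriv.
Qed.

Lemma exists_W0 y : - exp (-1) < y < 0 -> exists w, -1 <= w /\ w * exp w = y.
Proof.
  intros Hy.
  destruct (IVT (fun w => hW w - y) (-1) 0) as [z [Hz1 Hz2]].
  - apply continuity_minus; [apply hW_cont | apply continuity_const; intros ?? ; reflexivity].
  - lra.
  - unfold hW. replace (-1 * exp (-1)) with (- exp (-1)) by ring. lra.
  - unfold hW. rewrite Rmult_0_l. lra.
  - exists z. split; [lra|]. unfold hW in Hz2. lra.
Qed.

Lemma exists_Wm1 y : - exp (-1) < y < 0 -> exists w, w <= -1 /\ w * exp w = y.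
Proof.
  intros Hy.
  set (c := - y). set (s := 27 / c).
  assert (Hc1 : c < 1).
  { pose proof (exp_ineq1 (-1)). assert (-1 <> 0) by lra. specialize (H H0).
    pose proof (exp_pos (-1)). unfold c.
    assert (exp (-1) * exp 1 = 1) by (rewrite <- exp_plus; replace (-1+1) with 0 by ring; apply exp_0).
    pose proof (exp_ineq1 1). nra. }
  assert (Hc0 : 0 < c) by (unfold c; lra).
  assert (Hs : 27 < s) by (unfold s; apply Rlt_div_r; nra).
  assert (Hsc : s * c = 27) by (unfold s; field; lra).
  assert (Hes : exp s = exp (s/3) * exp (s/3) * exp (s/3)) by (rewrite <- !exp_plus; f_equal; field).
  pose proof (exp_ineq1 (s/3)).
  assert (H1 : 1 + s/3 < exp (s/3)) by (apply H; lra).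
  assert (H2 : s / c < exp s).
  { rewrite Hes. apply Rle_lt_trans with ((1 + s/3)^3).
    - apply Rle_trans with (s*s*s/27).
      + assert (s / c = s * s / 27) by (unfold s; field; lra). rewrite H0.
        apply Rmult_le_compat_r; [lra|]. nra.
      + nra.
    - assert (0 < 1 + s/3) by lra. simpl.
      set (u := 1 + s/3) in *. set (v := exp (s/3)) in *.
      assert (u*u < v*v) by nra. assert (0 < u*u) by nra. nra. }
  assert (Hneg : hW (-s) - y < 0 -> False -> True) by auto.
  destruct (IVT (fun w => y - hW w) (-s) (-1)) as [z [Hz1 Hz2]].
  - apply continuity_minus; [apply continuity_const; intros ?? ; reflexivity | apply hW_cont].
  - lra.
  - unfold hW. assert (exp (-s) * exp s = 1) by (rewrite <- exp_plus; replace (-s+s) with 0 by ring; apply exp_0).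
    pose proof (exp_pos (-s)). pose proof (exp_pos s).
    assert (s < c * exp s) by (apply (Rmult_lt_compat_l c) in H2; [|lra]; replace (c * (s/c)) with s in H2 by (field; lra); lra).
    unfold c in *. nra.
  - unfold hW. lra.
  - exists z. split; [lra|]. unfold hW in Hz2. lra.
Qed.

Lemma eig_char b c z : is_eigenvalue2 0 b c 0 z <-> (fst z * fst z - snd z * snd z = b * c /\ fst z * snd z = 0).
Proof.
  destruct z as [x y]. unfold is_eigenvalue2, Cminus, Cplus, Copp, Cmult, RtoC; simpl.
  split.
  - intro H. injection H as H1 H2. split; nra.
  - intros [H1 H2]. f_equal; nra.
Qed.

Lemma eig_saddle b c : 0 < b * c -> exists a b', a < 0 < b' /\
  forall z, is_eigenvalue2 0 b c 0 z <-> (z = RtoC a \/ z = RtoC b').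
Proof.
  intros H. set (s := sqrt (b*c)).
  assert (Hs : 0 < s) by (apply sqrt_lt_R0; auto).
  assert (Hss : s * s = b * c) by (apply sqrt_sqrt; lra).
  exists (-s), s. split; [lra|]. intro z. rewrite eig_char.
  destruct z as [x y]; unfold RtoC; simpl. split.
  - intros [H1 H2]. destruct (Rmult_integral _ _ H2) as [Hx|Hy].
    + subst. nra.
    + subst. assert ((x - s) * (x + s) = 0) by nra.
      destruct (Rmult_integral _ _ H0); [right|left]; f_equal; lra.
  - intros [E|E]; injection E as E1 E2; subst; split; nra.
Qed.

Lemma eig_center b c : b * c < 0 -> exists w, 0 < w /\
  forall z, is_eigenvalue2 0 b c 0 z <-> (z = (0, w) \/ z = (0, - w)).
Proof.
  intros H. set (s := sqrt (-(b*c))).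
  assert (Hs : 0 < s) by (apply sqrt_lt_R0; lra).
  assert (Hss : s * s = -(b * c)) by (apply sqrt_sqrt; lra).
  exists s. split; [lra|]. intro z. rewrite eig_char.
  destruct z as [x y]; simpl. split.
  - intros [H1 H2]. destruct (Rmult_integral _ _ H2) as [Hx|Hy].
    + subst. assert ((y - s) * (y + s) = 0) by nra.
      destruct (Rmult_integral _ _ H0); [left|right]; f_equal; lra.
    + subst. nra.
  - intros [E|E]; injection E as E1 E2; subst; split; nra.
Qed.

Lemma jac_fr11 V r psi : jac11 (fun x y => fr V x y) r psi = 0.
Proof. unfold jac11, fr. apply Derive_const. Qed.

Lemma jac_fr12 V r psi : jac12 (fun x y => fr V x y) r psi = V * sin psi.
Proof. unfold jac12, fr. apply is_derive_unique. auto_derive; auto. ring. Qed.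

Lemma jac_fpsi11 V Go l r psi : 0 < r -> 0 < l -> 0 < V -> 0 < Go ->
  jac11 (fpsi V Go l) r psi = (- 1 / (r*r) + exp (- r / l) / (rho V Go * l)) * V * sin psi.
Proof.
  intros Hr Hl HV HG. unfold jac11, fpsi, rho. apply is_derive_unique. auto_derive.
  - lra.
  - unfold Rdiv. field. repeat split; lra.
Qed.

Lemma jac_fpsi12 V Go l r psi :
  jac12 (fpsi V Go l) r psi = (1 / r - 1 / rho V Go * exp (- r / l)) * V * cos psi.
Proof.
  unfold jac12, fpsi. apply is_derive_unique. auto_derive; auto. ring.
Qed.

Lemma W0_spec y : - exp (-1) < y < 0 -> -1 <= LambertW0 y /\ LambertW0 y * exp (LambertW0 y) = y.
Proof. intros; unfold LambertW0; apply epsilon_spec; apply exists_W0; auto. Qed.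

Lemma Wm1_spec y : - exp (-1) < y < 0 -> LambertWm1 y <= -1 /\ LambertWm1 y * exp (LambertWm1 y) = y.
Proof. intros; unfold LambertWm1; apply epsilon_spec; apply exists_Wm1; auto. Qed.

Lemma W0_uniq y w : - exp (-1) < y < 0 -> -1 <= w -> w * exp w = y -> w = LambertW0 y.
Proof.
  intros Hy Hw E. destruct (W0_spec y Hy) as [H1 H2].
  destruct (Rtotal_order w (LambertW0 y)) as [Hl|[Hl|Hl]]; auto.
  - pose proof (hW_incr _ _ Hw Hl). unfold hW in *. lra.
  - pose proof (hW_incr _ _ H1 Hl). unfold hW in *. lra.
Qed.

Lemma Wm1_uniq y w : - exp (-1) < y < 0 -> w <= -1 -> w * exp w = y -> w = LambertWm1 y.
Proof.
  intros Hy Hw E. destruct (Wm1_spec y Hy) as [H1 H2].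
  destruct (Rtotal_order w (LambertWm1 y)) as [Hl|[Hl|Hl]]; auto.
  - pose proof (hW_decr _ _ H1 Hl). unfold hW in *. lra.
  - pose proof (hW_decr _ _ Hw Hl). unfold hW in *. lra.
Qed.

Lemma exp_m1_e : exp (-1) * exp 1 = 1.
Proof. rewrite <- exp_plus. replace (-1 + 1) with 0 by ring. apply exp_0. Qed.

Lemma equil_char V Go l r psi : 0 < V -> 0 < Go -> 0 < l -> 0 < r ->
  (fr V r psi = 0 /\ fpsi V Go l r psi = 0) <-> (cos psi = 0 /\ r * exp (- r / l) = rho V Go).
Proof.
  intros HV HG Hl Hr. unfold fr, fpsi, rho.
  assert (Hsc := sin2_cos2 psi). unfold Rsqr in Hsc.
  assert (Hrho : 0 < V / Go) by (apply Rdiv_lt_0_compat; auto).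
  assert (HE : 0 < exp (- r / l)) by apply exp_pos.
  set (E := exp (- r / l)) in *.
  split.
  - intros [H1 H2]. assert (Hc : cos psi = 0) by nra.
    split; auto. rewrite Hc in Hsc. assert (sin psi <> 0) by nra.
    assert (1 / r - 1 / (V / Go) * E = 0).
    { destruct (Rmult_integral _ _ H2) as [H3|H3]; [|contradiction].
      destruct (Rmult_integral _ _ H3); auto; lra. }
    assert (Hx : (1 / r - 1 / (V / Go) * E) * (r * (V/Go)) = V/Go - r * E) by (field; repeat split; lra).
    rewrite H0 in Hx. lra.
  - intros [Hc H]. rewrite Hc. split; [ring|].
    assert (1 / r - 1 / (V / Go) * E = 0).
    { rewrite <- H. field; repeat split; lra. }
    rewrite H0. ring.
Qed.

Lemma cos0_range psi : - PI < psi <= PI -> (cos psi = 0 <-> (psi = PI / 2 \/ psi = - (PI / 2))).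
Proof.
  intros Hp. split.
  - intros Hc. destruct (cos_eq_0_0 _ Hc) as [k Hk]. pose proof PI_RGT_0.
    assert (-2 < IZR k) by (apply (Rmult_lt_reg_r PI); nra).
    assert (IZR k < 1) by (apply (Rmult_lt_reg_r PI); nra).
    apply lt_IZR in H0. apply lt_IZR in H1.
    assert (k = 0 \/ k = -1)%Z as [->| ->] by lia; [left|right]; rewrite Hk; simpl; lra.
  - intros [->| ->]; [apply cos_PI2| rewrite cos_neg; apply cos_PI2].
Qed.

Lemma lin_at V Go l r psi z : 0 < V -> 0 < Go -> 0 < l -> 0 < r ->
  r * exp (- r / l) = rho V Go -> cos psi = 0 ->
  (lin_eigenvalue V Go l r psi z <->
   is_eigenvalue2 0 (V * sin psi) ((r - l) / (r * r * l) * V * sin psi) 0 z).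
Proof.
  intros HV HG Hl Hr He Hc. unfold lin_eigenvalue.
  rewrite jac_fr11, jac_fr12, jac_fpsi11, jac_fpsi12 by auto. rewrite Hc, Rmult_0_r.
  replace (- 1 / (r*r) + exp (- r / l) / (rho V Go * l)) with ((r - l) / (r * r * l)). reflexivity.
  rewrite <- He. pose proof (exp_pos (-r/l)). unfold rho in *. field. repeat split; lra.
Qed.

Lemma r_eq_w l y w : 0 < l -> w * exp w = y -> (- l * w) * exp (- (- l * w) / l) = - l * y.
Proof. intros Hl E. replace (- (- l * w) / l) with w by (field; lra). rewrite <- E. ring. Qed.

Theorem mainTheorem2 (V Go l : R) (hV : 0 < V) (hG : 0 < Go) (hl : 0 < l) :
  let rs  := - l * LambertWm1 (- rho V Go / l) in
  let rss := - l * LambertW0 (- rho V Go / l) in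
  (l > rho V Go * exp 1 ->
     0 < rs /\ 0 < rss /\ rs <> rss /\
     (forall r psi, - PI < psi <= PI ->
        (is_equilibrium V Go l r psi <->
         ((r = rs \/ r = rss) /\ (psi = PI / 2 \/ psi = - (PI / 2))))) /\
     saddle_type V Go l rs (PI / 2) /\ saddle_type V Go l rs (- (PI / 2)) /\
     center_type V Go l rss (PI / 2) /\ center_type V Go l rss (- (PI / 2))) /\
  (l < rho V Go * exp 1 -> forall r psi, ~ is_equilibrium V Go l r psi).
Proof.
  intros rs rss.
  assert (Hrho : 0 < rho V Go) by (unfold rho; apply Rdiv_lt_0_compat; auto).
  pose proof exp_m1_e as Hee. pose proof (exp_pos (-1)). pose proof (exp_pos 1).
  assert (Hrl : forall r, 0 < r -> r * exp (- r / l) = rho V Go -> hW (- r / l) = - rho V Go / l).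
  { intros r Hr E. unfold hW. replace (- rho V Go / l) with (- (r * exp (- r / l)) / l) by (rewrite E; auto).
    field. lra. }
  split.
  - intros Hgt.
    set (y := - rho V Go / l) in *.
    assert (Hy : - exp (-1) < y < 0).
    { unfold y. split.
      - assert (rho V Go < l * exp (-1)) by nra.
        apply (Rmult_lt_reg_r l); [lra|]. replace (- rho V Go / l * l) with (- rho V Go) by (field; lra). nra.
      - assert (0 < rho V Go / l) by (apply Rdiv_lt_0_compat; auto). unfold Rdiv in *. lra. }
    destruct (Wm1_spec y Hy) as [Hm1 Em1]. destruct (W0_spec y Hy) as [H01 E01].
    assert (Hm1s : LambertWm1 y < -1).
    { destruct Hm1 as [|E]; auto. rewrite E in Em1. lra. }
    assert (H0s : -1 < LambertW0 y < 0).
    { split.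
      - destruct H01 as [|E]; auto. rewrite <- E in E01. lra.
      - destruct (Rlt_or_le (LambertW0 y) 0) as [|Hle]; auto.
        pose proof (exp_pos (LambertW0 y)). nra. }
    assert (Hrs : l < rs) by (unfold rs; nra).
    assert (Hrss : 0 < rss < l) by (unfold rss; split; nra).
    assert (Ers : rs * exp (- rs / l) = rho V Go).
    { unfold rs. rewrite (r_eq_w l y _ hl Em1). unfold y. field. lra. }
    assert (Erss : rss * exp (- rss / l) = rho V Go).
    { unfold rss. rewrite (r_eq_w l y _ hl E01). unfold y. field. lra. }
    assert (Hsad : forall psi, cos psi = 0 -> sin psi * sin psi = 1 -> saddle_type V Go l rs psi).
    { intros psi Hc Hs. unfold saddle_type.
      destruct (eig_saddle (V * sin psi) ((rs - l) / (rs * rs * l) * V * sin psi)) as [a [b [Hab Hz]]].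
      - replace (V * sin psi * ((rs - l) / (rs * rs * l) * V * sin psi)) with
          ((V * V) * (rs - l) / (rs * rs * l) * (sin psi * sin psi)) by (field; repeat split; lra).
        rewrite Hs, Rmult_1_r. apply Rdiv_lt_0_compat; [apply Rmult_lt_0_compat; [nra|lra] | assert (0 < rs * rs) by nra; nra].
      - exists a, b. split; auto. intro z. rewrite lin_at by (auto; lra). apply Hz. }
    assert (Hcen : forall psi, cos psi = 0 -> sin psi * sin psi = 1 -> center_type V Go l rss psi).
    { intros psi Hc Hs. unfold center_type.
      destruct (eig_center (V * sin psi) ((rss - l) / (rss * rss * l) * V * sin psi)) as [w [Hw Hz]].
      - replace (V * sin psi * ((rss - l) / (rss * rss * l) * V * sin psi)) with
          (- ((V * V) * (l - rss) / (rss * rss * l)) * (sin psi * sin psi)) by (field; repeat split; lra).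
        rewrite Hs, Rmult_1_r. assert (0 < (V * V) * (l - rss) / (rss * rss * l)) by (apply Rdiv_lt_0_compat; [apply Rmult_lt_0_compat; [nra|lra] | assert (0 < rss * rss) by nra; nra]). lra.
      - exists w. split; auto. intro z. rewrite lin_at by (auto; lra). apply Hz. }
    assert (c1 : cos (PI/2) = 0) by apply cos_PI2.
    assert (c2 : cos (-(PI/2)) = 0) by (rewrite cos_neg; apply cos_PI2).
    assert (s1 : sin (PI/2) * sin (PI/2) = 1) by (rewrite sin_PI2; ring).
    assert (s2 : sin (-(PI/2)) * sin (-(PI/2)) = 1) by (rewrite sin_neg, sin_PI2; ring).
    split; [lra|]. split; [lra|]. split; [lra|].
    split; [|repeat split; auto].
    intros r psi Hp. unfold is_equilibrium. rewrite <- cos0_range by auto.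
    split.
    + intros [Hr HH]. apply equil_char in HH; auto. destruct HH as [Hc E]. split; auto.
      pose proof (Hrl r Hr E) as Hh. fold y in Hh. unfold hW in Hh.
      destruct (Rle_or_lt (- r / l) (-1)) as [Hw|Hw].
      * left. pose proof (Wm1_uniq y _ Hy Hw Hh) as Ew. unfold rs. rewrite <- Ew. field. lra.
      * right. pose proof (W0_uniq y _ Hy (Rlt_le _ _ Hw) Hh) as Ew. unfold rss. rewrite <- Ew. field; lra.
    + intros [[-> | ->] Hc]; (split; [lra|]); apply equil_char; auto; lra.
  - intros Hlt r psi [Hr HH]. apply equil_char in HH; auto. destruct HH as [Hc E].
    pose proof (Hrl r Hr E) as Hh. pose proof (hW_lb (- r / l)). rewrite Hh in H1.
    assert (rho V Go <= l * exp (-1)).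
    { apply (Rmult_le_reg_r (/ l)); [apply Rinv_0_lt_compat; lra|].
      replace (l * exp (-1) * / l) with (exp (-1)) by (field; lra). unfold Rdiv in H1. lra. }
    nra.
Qed.
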